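(* Let $\alpha_a$ be a labeled dGL hybrid game, $S$ an Angelic subvalue map for $\alpha_a$ and $\varphi$ a formula compatible with $S$ (i.e. $\models S(\mathsf{end})\rightarrow\varphi$). Then every state satisfying $\langle\alpha\rangle\varphi$ satisfies $\langle\mathcal{U}(\alpha_a,S)\rangle\varphi$.
   Context: Differential game logic (dGL). Hybrid games are generated by $\alpha,\beta ::= x:=e \mid \alpha;\beta \mid ?Q \mid \{x'=f(x)\,\&\,Q\} \mid \alpha^{*} \mid \alpha\cup\beta \mid x:=* \mid\ !Q \mid \{x'=f(x)\,\&\,Q\}^{d} \mid \alpha^{\times} \mid \alpha\cap\beta \mid x:=\otimes$, with $x$ a real variable (vector for ODEs), $e,f(x)$ polynomial terms, $Q$ a formula. Players Angel and Demon: $x:=e$ deterministic assignment; in $x:=*$ Angel (in $x:=\otimes$ Demon) assigns any real; in $\{x'=f(x)\&Q\}$ Angel (in $\{\cdot\}^d$ Demon) chooses a duration $r\ge 0$ of following the ODE with $Q$ true throughout; $?Q$ makes Angel lose and $!Q$ makes Demon lose if $Q$ is false; in $\alpha\cup\beta$ Angel (in $\alpha\cap\beta$ Demon) chooses the branch; in $\alpha^*$ Angel (in $\alpha^\times$ Demon) decides before each iteration whether to repeat or stop; $\alpha;\beta$ sequential. Formulas: polynomial (in)equalities closed under connectives, real quantifiers, and modalities $\langle\alpha\rangle\varphi$ (Angel can win $\alpha$ reaching $\varphi$) and $[\alpha]\varphi\equiv\neg\langle\alpha\rangle\neg\varphi$, with the standard dGL winning-region semantics ($\langle x:=*\rangle\varphi\leftrightarrow\exists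 x\varphi$, $\langle x:=\otimes\rangle\varphi\leftrightarrow\forall x\varphi$, $\langle ?Q\rangle\varphi\leftrightarrow Q\wedge\varphi$, $\langle !Q\rangle\varphi\leftrightarrow(Q\rightarrow\varphi)$, $\cup$ as disjunction, $\cap$ as conjunction, $\langle\alpha;\beta\rangle\varphi\leftrightarrow\langle\alpha\rangle\langle\beta\rangle\varphi$, Angel ODE existential, Demon ODE universal over durations/solutions staying in $Q$, $\langle\alpha^*\rangle$ least and $\langle\alpha^\times\rangle$ greatest fixed point). $\models$ denotes validity. Labels: every node of the syntax tree carries a unique label; $\alpha_a$ has root label $a$; $\mathrm{nodes}(\alpha_a)$ is its set of subgame labels; $\mathsf{end}$ is a special extra label. A map $S$ assigns formulas to a label set containing $\mathrm{nodes}(\alpha_a)\cup\{\mathsf{end}\}$; $S\{\mathsf{end}\mapsto Q\}$ replaces the value at $\mathsf{end}$. $\gamma_g,\delta_d$ denote immediate subgames with root labels $g,d$. Game suffix: $\mathrm{suffix}_a(\alpha_a)=\alpha_a$; for $b\ne a$: for loops $((\gamma_g)^* )_a,((\gamma_g)^\times)_a$ it is $\mathrm{suffix}_b(\gamma_g);\alpha_a$; for $\cup,\cap$ the suffix within the branch containing $b$; for $(\gamma_g;\delta_d)_a$ it is $\mathrm{suffix}_b(\gamma_g);\delta_d$ if $b\in\mathrm{nodes}(\gamma_g)$ else $\mathrm{suffix}_b(\delta_d)$. An Angelic subvalue map for $\alpha_a$ is a map $S$ with $\models S(b)\rightarrow\langle\mathrm{suffix}_b(\alpha_a)\rangle S(\mathsf{end})$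 for all $b\in\mathrm{nodes}(\alpha_a)$. Universal projection $\mathcal{U}(\alpha_a,S)$: $(x:=* )_a\mapsto (x:=\otimes)_a;\,!S(\mathsf{end})$; $\{x'=f(x)\&Q\}_a\mapsto(\{x'=f(x)\&Q\}^d)_a;\,!S(\mathsf{end})$; $(\gamma_g\cup\delta_d)_a\mapsto(!S(g);\mathcal{U}(\gamma_g,S))\cap(!S(d);\mathcal{U}(\delta_d,S))$; $((\gamma_g)^* )_a\mapsto(!S(g);\mathcal{U}(\gamma_g,S\{\mathsf{end}\mapsto S(a)\}))^{\times};\,!S(\mathsf{end})$; $(\gamma_g;\delta_d)_a\mapsto\mathcal{U}(\gamma_g,S\{\mathsf{end}\mapsto S(d)\});\mathcal{U}(\delta_d,S)$; $(\gamma_g\cap\delta_d)_a\mapsto\mathcal{U}(\gamma_g,S)\cap\mathcal{U}(\delta_d,S)$; $((\gamma_g)^\times)_a\mapsto\mathcal{U}(\gamma_g,S\{\mathsf{end}\mapsto S(a)\})^\times$; $x:=e,x:=\otimes,?Q,!Q,\{x'=f(x)\&Q\}^d$ unchanged (labels preserved, new nodes fresh labels). *)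

(* Defs.v *)
From Stdlib Require Import Reals List.
Open Scope R_scope.

Definition var := nat.
Definition lbl := nat.
Definition state := var -> R.

Inductive term : Type :=
| TVar   : var -> term
| TConst : R -> term
| TNeg   : term -> term
| TPlus  : term -> term -> term
| TMinus : term -> term -> term
| TTimes : term -> term -> term.

Inductive fml : Type :=
| FTrue  : fml
| FFalse : fml
| FEq    : term -> term -> fml
| FLe    : term -> term -> fml
| FLt    : term -> term -> fml
| FNot   : fml -> fml
| FAnd   : fml -> fml -> fml
| FOr    : fml -> fml -> fml
| FImp   : fml -> fml -> fml
| FEx    : var -> fml -> fml
| FAll   : var -> fml -> fml
| FDia   : game -> fml -> fml
| FBox   : game -> fml -> fml
with game : Type :=
| GAssign : lbl -> var -> term -> game
| GSeq    : lbl -> game -> game -> game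
| GTestA  : lbl -> fml -> game
| GOdeA   : lbl -> list (var * term) -> fml -> game
| GLoopA  : lbl -> game -> game
| GChoiceA: lbl -> game -> game -> game
| GAnyA   : lbl -> var -> game
| GTestD  : lbl -> fml -> game                           (* !Q *)
| GOdeD   : lbl -> list (var * term) -> fml -> game
| GLoopD  : lbl -> game -> game
| GChoiceD: lbl -> game -> game -> game
| GAnyD   : lbl -> var -> game.

Fixpoint tsem (e : term) (s : state) : R :=
  match e with
  | TVar x => s x
  | TConst c => c
  | TNeg e1 => - tsem e1 s
  | TPlus e1 e2 => tsem e1 s + tsem e2 s
  | TMinus e1 e2 => tsem e1 s - tsem e2 s
  | TTimes e1 e2 => tsem e1 s * tsem e2 s
  end.

Definition upd (s : state) (x : var) (v : R) : state :=
  fun y => if Nat.eqb y x then v else s y.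

Definition ode_sol (ode : list (var * term)) (s : state) (r : R)
  (phi : R -> state) : Prop :=
  (forall y, phi 0 y = s y) /\
  forall t, 0 <= t <= r ->
    (forall y, ~ In y (map fst ode) -> phi t y = s y) /\
    (forall x e, In (x, e) ode ->
       derivable_pt_lim (fun u => phi u x) t (tsem e (phi t))).

(** [fsem phi] is the set of states satisfying phi;
    [gsem alpha X] is Angel's winning region of game alpha for goal X. *)
Fixpoint fsem (f : fml) (s : state) {struct f} : Prop :=
  match f with
  | FTrue => True
  | FFalse => False
  | FEq e1 e2 => tsem e1 s = tsem e2 s
  | FLe e1 e2 => tsem e1 s <= tsem e2 s
  | FLt e1 e2 => tsem e1 s < tsem e2 s
  | FNot f1 => ~ fsem f1 s
  | FAnd f1 f2 => fsem f1 s /\ fsem f2 s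
  | FOr f1 f2 => fsem f1 s \/ fsem f2 s
  | FImp f1 f2 => fsem f1 s -> fsem f2 s
  | FEx x f1 => exists v, fsem f1 (upd s x v)
  | FAll x f1 => forall v, fsem f1 (upd s x v)
  | FDia a f1 => gsem a (fsem f1) s
  | FBox a f1 => ~ gsem a (fun t => ~ fsem f1 t) s
  end
with gsem (g : game) (X : state -> Prop) (s : state) {struct g} : Prop :=
  match g with
  | GAssign _ x e => X (upd s x (tsem e s))
  | GSeq _ a b => gsem a (gsem b X) s
  | GTestA _ Q => fsem Q s /\ X s
  | GTestD _ Q => fsem Q s -> X s
  | GOdeA _ ode Q =>
      exists r phi, 0 <= r /\ ode_sol ode s r phi /\
        (forall t, 0 <= t <= r -> fsem Q (phi t)) /\ X (phi r)
  | GOdeD _ ode Q =>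
      forall r phi, 0 <= r -> ode_sol ode s r phi ->
        (forall t, 0 <= t <= r -> fsem Q (phi t)) -> X (phi r)
  | GChoiceA _ a b => gsem a X s \/ gsem b X s
  | GChoiceD _ a b => gsem a X s /\ gsem b X s
  | GAnyA _ x => exists v, X (upd s x v)
  | GAnyD _ x => forall v, X (upd s x v)
  | GLoopA _ a =>
      (* least fixed point of Z |-> X ∪ gsem a Z *)
      forall Z : state -> Prop,
        (forall t, X t \/ gsem a Z t -> Z t) -> Z s
  | GLoopD _ a =>
      (* greatest fixed point of Z |-> X ∩ gsem a Z *)
      exists Z : state -> Prop,
        (forall t, Z t -> X t /\ gsem a Z t) /\ Z s
  end.

Definition valid (f : fml) : Prop := forall s, fsem f s.

Definition root (g : game) : lbl :=
  match g with
  | GAssign a _ _ | GSeq a _ _ | GTestA a _ | GOdeA a _ _ | GLoopA a _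
  | GChoiceA a _ _ | GAnyA a _ | GTestD a _ | GOdeD a _ _ | GLoopD a _
  | GChoiceD a _ _ | GAnyD a _ => a
  end.

Fixpoint nodes (g : game) : list lbl :=
  match g with
  | GSeq a g1 g2 | GChoiceA a g1 g2 | GChoiceD a g1 g2 =>
      a :: nodes g1 ++ nodes g2
  | GLoopA a g1 | GLoopD a g1 => a :: nodes g1
  | _ => root g :: nil
  end.

Definition uniquely_labelled (g : game) : Prop := NoDup (nodes g).

(** A label not occurring in [g], used for the newly created nodes. *)
Definition fresh (g : game) : lbl := S (list_max (nodes g)).

(** Game suffix suffix_b(alpha); only meaningful for b ∈ nodes(alpha)
    (other cases return an arbitrary default).  [fr] labels new nodes. *)
Fixpoint suffix_aux (fr : lbl) (b : lbl) (g : game) : game :=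
  if Nat.eqb b (root g) then g else
  match g with
  | GLoopA _ g1 | GLoopD _ g1 => GSeq fr (suffix_aux fr b g1) g
  | GChoiceA _ g1 g2 | GChoiceD _ g1 g2 =>
      if in_dec Nat.eq_dec b (nodes g1) then suffix_aux fr b g1
      else suffix_aux fr b g2
  | GSeq _ g1 g2 =>
      if in_dec Nat.eq_dec b (nodes g1) then GSeq fr (suffix_aux fr b g1) g2
      else suffix_aux fr b g2
  | _ => g
  end.

Definition suffix (b : lbl) (g : game) : game := suffix_aux (fresh g) b g.

(** A map S assigns formulas to labels; [None] is the extra label [end]. *)
Definition smap := option lbl -> fml.

Definition S_end (S : smap) : fml := S None.
Definition S_at (S : smap) (b : lbl) : fml := S (Some b).

Definition set_end (S : smap) (Q : fml) : smap :=
  fun l => match l with None => Q | Some b => S (Some b) end.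

Definition angelic_subvalue_map (g : game) (S : smap) : Prop :=
  forall b, In b (nodes g) -> valid (FImp (S_at S b) (FDia (suffix b g) (S_end S))).

Fixpoint uproj_aux (fr : lbl) (g : game) (S : smap) {struct g} : game :=
  match g with
  | GAnyA a x => GSeq fr (GAnyD a x) (GTestD fr (S_end S))
  | GOdeA a ode Q => GSeq fr (GOdeD a ode Q) (GTestD fr (S_end S))
  | GChoiceA a g1 g2 =>
      GChoiceD fr
        (GSeq fr (GTestD fr (S_at S (root g1))) (uproj_aux fr g1 S))
        (GSeq fr (GTestD fr (S_at S (root g2))) (uproj_aux fr g2 S))
  | GLoopA a g1 =>
      GSeq fr
        (GLoopD fr (GSeq fr (GTestD fr (S_at S (root g1)))
                            (uproj_aux fr g1 (set_end S (S_at S a)))))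
        (GTestD fr (S_end S))
  | GSeq a g1 g2 =>
      GSeq fr (uproj_aux fr g1 (set_end S (S_at S (root g2)))) (uproj_aux fr g2 S)
  | GChoiceD a g1 g2 => GChoiceD fr (uproj_aux fr g1 S) (uproj_aux fr g2 S)
  | GLoopD a g1 => GLoopD fr (uproj_aux fr g1 (set_end S (S_at S a)))
  | _ => g
  end.

Definition uproj (g : game) (S : smap) : game := uproj_aux (fresh g) g S.

(* Main.v *)
Require Import Defs.
From Stdlib Require Import Reals List.

Lemma nodup_disj {A} (l1 l2 : list A) x :
  NoDup (l1 ++ l2) -> In x l1 -> ~ In x l2.
Proof.
  induction l1 as [|y l1 IH]; simpl; [tauto|].
  intros H [<-|Hx] Hx2; inversion H; subst.
  - apply H2. apply in_or_app. right; exact Hx2.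
  - exact (IH H3 Hx Hx2).
Qed.

Lemma nodup3 {A} (a : A) l1 l2 : NoDup (a :: l1 ++ l2) ->
  ~ In a l1 /\ ~ In a l2 /\ NoDup l1 /\ NoDup l2 /\ (forall x, In x l1 -> ~ In x l2).
Proof.
  intros H; inversion H; subst.
  split; [intro; apply H2; apply in_or_app; left; auto|].
  split; [intro; apply H2; apply in_or_app; right; auto|].
  split; [exact (NoDup_app_remove_r _ _ H3)|].
  split; [exact (NoDup_app_remove_l _ _ H3)|].
  intros x Hx; exact (nodup_disj _ _ _ H3 Hx).
Qed.

Lemma gsem_mono : forall g (X Y : state -> Prop), (forall t, X t -> Y t) ->
  forall s, gsem g X s -> gsem g Y s.
Proof.
  induction g; intros X Y HXY s Hs; simpl in *.
  - auto.
  - eapply IHg1; [|exact Hs]. intros t; apply IHg2; auto.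
  - destruct Hs; split; auto.
  - destruct Hs as [r [p [H1 [H2 [H3 H4]]]]]. exists r, p; auto.
  - intros Z HZ. apply Hs. intros t [Ht|Ht]; apply HZ; [left; auto| right; auto].
  - destruct Hs as [H|H]; [left; eapply IHg1| right; eapply IHg2]; eauto.
  - destruct Hs as [w Hw]; exists w; auto.
  - auto.
  - intros r p H1 H2 H3; apply HXY; auto.
  - destruct Hs as [Z [HZ Zs]]; exists Z; split; auto.
    intros t Ht; destruct (HZ t Ht); auto.
  - destruct Hs; split; [eapply IHg1|eapply IHg2]; eauto.
  - auto.
Qed.

Lemma in_root g : In (root g) (nodes g).
Proof. destruct g; simpl; auto. Qed.

Lemma suf_root fr g : suffix_aux fr (root g) g = g.
Proof. destruct g; simpl; rewrite Nat.eqb_refl; reflexivity. Qed.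

Lemma suf_seq1 fr b a g1 g2 : b <> a -> In b (nodes g1) ->
  suffix_aux fr b (GSeq a g1 g2) = GSeq fr (suffix_aux fr b g1) g2.
Proof.
  intros H1 H2; simpl. apply Nat.eqb_neq in H1; rewrite H1.
  destruct (in_dec Nat.eq_dec b (nodes g1)); tauto.
Qed.

Lemma suf_seq2 fr b a g1 g2 : b <> a -> ~ In b (nodes g1) ->
  suffix_aux fr b (GSeq a g1 g2) = suffix_aux fr b g2.
Proof.
  intros H1 H2; simpl. apply Nat.eqb_neq in H1; rewrite H1.
  destruct (in_dec Nat.eq_dec b (nodes g1)); tauto.
Qed.

Lemma suf_chA1 fr b a g1 g2 : b <> a -> In b (nodes g1) ->
  suffix_aux fr b (GChoiceA a g1 g2) = suffix_aux fr b g1.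
Proof.
  intros H1 H2; simpl. apply Nat.eqb_neq in H1; rewrite H1.
  destruct (in_dec Nat.eq_dec b (nodes g1)); tauto.
Qed.

Lemma suf_chA2 fr b a g1 g2 : b <> a -> ~ In b (nodes g1) ->
  suffix_aux fr b (GChoiceA a g1 g2) = suffix_aux fr b g2.
Proof.
  intros H1 H2; simpl. apply Nat.eqb_neq in H1; rewrite H1.
  destruct (in_dec Nat.eq_dec b (nodes g1)); tauto.
Qed.

Lemma suf_chD1 fr b a g1 g2 : b <> a -> In b (nodes g1) ->
  suffix_aux fr b (GChoiceD a g1 g2) = suffix_aux fr b g1.
Proof.
  intros H1 H2; simpl. apply Nat.eqb_neq in H1; rewrite H1.
  destruct (in_dec Nat.eq_dec b (nodes g1)); tauto.
Qed.

Lemma suf_chD2 fr b a g1 g2 : b <> a -> ~ In b (nodes g1) ->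
  suffix_aux fr b (GChoiceD a g1 g2) = suffix_aux fr b g2.
Proof.
  intros H1 H2; simpl. apply Nat.eqb_neq in H1; rewrite H1.
  destruct (in_dec Nat.eq_dec b (nodes g1)); tauto.
Qed.

Lemma suf_lA fr b a g1 : b <> a ->
  suffix_aux fr b (GLoopA a g1) = GSeq fr (suffix_aux fr b g1) (GLoopA a g1).
Proof. intros H1; simpl. apply Nat.eqb_neq in H1; rewrite H1. reflexivity. Qed.

Lemma suf_lD fr b a g1 : b <> a ->
  suffix_aux fr b (GLoopD a g1) = GSeq fr (suffix_aux fr b g1) (GLoopD a g1).
Proof. intros H1; simpl. apply Nat.eqb_neq in H1; rewrite H1. reflexivity. Qed.

Lemma neq_of {A} (a b : A) l : In b l -> ~ In a l -> b <> a.
Proof. intros H1 H2 ->; auto. Qed.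

Lemma key : forall g fr fr' (S : smap) (X psi : state -> Prop),
  NoDup (nodes g) ->
  (forall b, In b (nodes g) -> forall t, fsem (S_at S b) t -> gsem (suffix_aux fr b g) X t) ->
  (forall t, X t -> psi t) ->
  (forall t, fsem (S_end S) t -> psi t) ->
  forall s, gsem g psi s -> gsem (uproj_aux fr' g S) psi s.
Proof.
  induction g; intros fr fr' S X psi Hnd Hsv HX Hend s Hs.
  - exact Hs.
  -
    simpl in Hnd. destruct (nodup3 _ _ _ Hnd) as [Ha1 [Ha2 [Hn1 [Hn2 Hdj]]]].
    assert (Hsv2 : forall b, In b (nodes g2) -> forall t, fsem (S_at S b) t ->
               gsem (suffix_aux fr b g2) X t).
    { intros b Hb t Ht. rewrite <- (suf_seq2 fr b l g1 g2).
      - apply Hsv; auto. simpl; right; apply in_or_app; auto.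
      - exact (neq_of _ _ _ Hb Ha2).
      - intro H; exact (Hdj b H Hb). }
    pose proof (IHg2 fr fr' S X psi Hn2 Hsv2 HX Hend) as IHd.
    simpl.
    apply (IHg1 fr fr' (set_end S (S_at S (root g2))) (gsem g2 X)
                (gsem (uproj_aux fr' g2 S) psi) Hn1).
    + intros b Hb t Ht.
      pose proof (Hsv b (or_intror (in_or_app _ _ _ (or_introl Hb))) t Ht) as H.
      rewrite suf_seq1 in H; [exact H| exact (neq_of _ _ _ Hb Ha1) | exact Hb].
    + intros t H. apply IHd. exact (gsem_mono g2 X psi HX t H).
    + intros t H. apply IHd. apply (gsem_mono g2 X psi HX).
      pose proof (Hsv2 (root g2) (in_root g2) t H) as H'.
      rewrite suf_root in H'; exact H'.
    + exact (gsem_mono g1 _ _ IHd s Hs).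
  - exact Hs.
  - simpl. intros r p H1 H2 H3 H4. exact (Hend _ H4).
  -
    simpl in Hnd. inversion Hnd as [|? ? Ha Hn1]; subst.
    simpl. exists (fun _ => True). split; [|exact I].
    intros t _; split; [apply Hend|]. intros Ht.
    apply (IHg fr fr' (set_end S (S_at S l)) (gsem (GLoopA l g) X) (fun _ => True) Hn1).
    + intros b Hb u Hu.
      pose proof (Hsv b (or_intror Hb) u Hu) as H.
      rewrite suf_lA in H; [exact H| exact (neq_of _ _ _ Hb Ha)].
    + intros; exact I.
    + intros; exact I.
    + apply (gsem_mono g (gsem (GLoopA l g) X)); [intros; exact I|].
      pose proof (Hsv (root g) (or_intror (in_root g)) t Ht) as H.
      rewrite suf_lA in H; [|exact (neq_of _ _ _ (in_root g) Ha)].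
      rewrite suf_root in H. exact H.
  -
    simpl in Hnd. destruct (nodup3 _ _ _ Hnd) as [Ha1 [Ha2 [Hn1 [Hn2 Hdj]]]].
    simpl. split; intro Ht.
    + apply (IHg1 fr fr' S X psi Hn1).
      * intros b Hb u Hu.
        pose proof (Hsv b (or_intror (in_or_app _ _ _ (or_introl Hb))) u Hu) as H.
        rewrite suf_chA1 in H; [exact H| exact (neq_of _ _ _ Hb Ha1) | exact Hb].
      * exact HX.
      * exact Hend.
      * apply (gsem_mono g1 X psi HX).
        pose proof (Hsv (root g1) (or_intror (in_or_app _ _ _ (or_introl (in_root g1)))) s Ht) as H.
        rewrite suf_chA1 in H; [|exact (neq_of _ _ _ (in_root g1) Ha1) | exact (in_root g1)].
        rewrite suf_root in H; exact H.
    + apply (IHg2 fr fr' S X psi Hn2).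
      * intros b Hb u Hu.
        pose proof (Hsv b (or_intror (in_or_app _ _ _ (or_intror Hb))) u Hu) as H.
        rewrite suf_chA2 in H; [exact H| exact (neq_of _ _ _ Hb Ha2) | intro Hc; exact (Hdj b Hc Hb)].
      * exact HX.
      * exact Hend.
      * apply (gsem_mono g2 X psi HX).
        pose proof (Hsv (root g2) (or_intror (in_or_app _ _ _ (or_intror (in_root g2)))) s Ht) as H.
        rewrite suf_chA2 in H; [|exact (neq_of _ _ _ (in_root g2) Ha2) | intro Hc; exact (Hdj _ Hc (in_root g2))].
        rewrite suf_root in H; exact H.
  - simpl. intros w Hw. exact (Hend _ Hw).
  - exact Hs.
  - exact Hs.
  -
    simpl in Hnd. inversion Hnd as [|? ? Ha Hn1]; subst.
    destruct Hs as [Z [HZ Zs]].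
    set (W := gsem (GLoopD l g) X).
    simpl. exists (fun t => Z t \/ W t). split; [|left; exact Zs].
    assert (IH : forall t, gsem g (fun t => Z t \/ W t) t ->
                 gsem (uproj_aux fr' g (set_end S (S_at S l))) (fun t => Z t \/ W t) t).
    { apply (IHg fr fr' (set_end S (S_at S l)) W (fun t => Z t \/ W t) Hn1).
      - intros b Hb u Hu.
        pose proof (Hsv b (or_intror Hb) u Hu) as H.
        rewrite suf_lD in H; [exact H| exact (neq_of _ _ _ Hb Ha)].
      - intros; right; auto.
      - intros u Hu. right.
        pose proof (Hsv l (or_introl eq_refl) u Hu) as H.
        change l with (root (GLoopD l g)) in H at 1. rewrite suf_root in H. exact H. }
    intros t [Ht|Ht].
    + split; [exact (proj1 (HZ t Ht))|]. apply IH.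
      exact (gsem_mono g Z _ (fun u Hu => or_introl Hu) t (proj2 (HZ t Ht))).
    + destruct Ht as [Z0 [HZ0 Z0t]].
      split; [exact (HX _ (proj1 (HZ0 t Z0t)))|]. apply IH.
      apply (gsem_mono g Z0 _ (fun u Hu => or_intror (ex_intro _ Z0 (conj HZ0 Hu))) t).
      exact (proj2 (HZ0 t Z0t)).
  -
    simpl in Hnd. destruct (nodup3 _ _ _ Hnd) as [Ha1 [Ha2 [Hn1 [Hn2 Hdj]]]].
    destruct Hs as [Hs1 Hs2].
    simpl. split.
    + apply (IHg1 fr fr' S X psi Hn1); auto.
      intros b Hb u Hu.
      pose proof (Hsv b (or_intror (in_or_app _ _ _ (or_introl Hb))) u Hu) as H.
      rewrite suf_chD1 in H; [exact H| exact (neq_of _ _ _ Hb Ha1) | exact Hb].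
    + apply (IHg2 fr fr' S X psi Hn2); auto.
      intros b Hb u Hu.
      pose proof (Hsv b (or_intror (in_or_app _ _ _ (or_intror Hb))) u Hu) as H.
      rewrite suf_chD2 in H; [exact H| exact (neq_of _ _ _ Hb Ha2) | intro Hc; exact (Hdj b Hc Hb)].
  - exact Hs.
Qed.

Theorem mainTheorem8 (alpha : game) (S : smap) (phi : fml) :
  uniquely_labelled alpha ->
  angelic_subvalue_map alpha S ->
  valid (FImp (S_end S) phi) ->
  forall s : state, fsem (FDia alpha phi) s -> fsem (FDia (uproj alpha S) phi) s.
Proof.
  intros Hu Hsv Hend s Hs.
  exact (key alpha (fresh alpha) (fresh alpha) S (fsem (S_end S)) (fsem phi) Hu
           (fun b Hb t Ht => Hsv b Hb t Ht) (fun t H => Hend t H) (fun t H => Hend t H) s Hs).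
Qed.
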